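(* Let $0<R<1$ and let $f$ be a circular tractrix with parameter $R$ and constants $c_1^2-c_2^2=1$. Then $f'(t)=0$ if and only if $t\in\frac{\pi}{\lambda}\mathbb Z$. Moreover, for every $n\in\mathbb Z$ the length of the arc $f|_{[n\pi/\lambda,(n+1)\pi/\lambda]}$ between two consecutive singular points equals $$\operatorname{sign}(c_1)\,\ln\left|\frac{c_1+R}{c_1-R}\right|,$$ which is finite and positive.
   Context: Fix $0<R<1$, $\lambda=\frac{\sqrt{1-R^2}}{R}$, and real constants $c_1,c_2$ with $c_1^2-c_2^2=1$. The circular tractrix is $f(t)=\big(\xi_1\cos\tfrac tR+\xi_2\sin\tfrac tR,\ -\xi_2\cos\tfrac tR+\xi_1\sin\tfrac tR,\ \xi_3\big)$, $t\in\mathbb R$, with $\xi_1=\frac{(R-\frac1R)\cos\lambda t}{\frac{c_1}{R}+\cos\lambda t}$, $\xi_2=-\frac{\lambda\sin\lambda t}{\frac{c_1}{R}+\cos\lambda t}$, $\xi_3=\frac{\lambda c_2}{\frac{c_1}{R}+\cos\lambda t}$. *)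

(* Defs.v *)
From Stdlib Require Import Reals.
From Coquelicot Require Import Coquelicot.
Open Scope R_scope.

Definition lam (Rr : R) : R := sqrt (1 - Rr ^ 2) / Rr.

Definition xi1 (Rr c1 : R) (t : R) : R :=
  (Rr - 1 / Rr) * cos (lam Rr * t) / (c1 / Rr + cos (lam Rr * t)).
Definition xi2 (Rr c1 : R) (t : R) : R :=
  - (lam Rr * sin (lam Rr * t)) / (c1 / Rr + cos (lam Rr * t)).
Definition xi3 (Rr c1 c2 : R) (t : R) : R :=
  lam Rr * c2 / (c1 / Rr + cos (lam Rr * t)).

Definition tr1 (Rr c1 c2 : R) (t : R) : R :=
  xi1 Rr c1 t * cos (t / Rr) + xi2 Rr c1 t * sin (t / Rr).
Definition tr2 (Rr c1 c2 : R) (t : R) : R :=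
  - xi2 Rr c1 t * cos (t / Rr) + xi1 Rr c1 t * sin (t / Rr).
Definition tr3 (Rr c1 c2 : R) (t : R) : R := xi3 Rr c1 c2 t.

Definition speed (Rr c1 c2 : R) (t : R) : R :=
  sqrt (Derive (tr1 Rr c1 c2) t ^ 2 + Derive (tr2 Rr c1 c2) t ^ 2
        + Derive (tr3 Rr c1 c2) t ^ 2).

Definition arc_length (Rr c1 c2 a b : R) : R := RInt (speed Rr c1 c2) a b.

Definition sgn (x : R) : R := if Rlt_dec 0 x then 1 else if Rlt_dec x 0 then -1 else 0.

(* Main.v *)
Require Import Defs.
From Stdlib Require Import Reals ZArith Lra.
From Coquelicot Require Import Coquelicot.
Open Scope R_scope.

Definition Dn (Rr c1 t : R) := c1 / Rr + cos (lam Rr * t).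
Definition dxi1 Rr c1 t := -(Rr - 1/Rr) * lam Rr * sin (lam Rr * t) * (c1/Rr) / Dn Rr c1 t ^ 2.
Definition dxi2 Rr c1 t := - lam Rr * (lam Rr * cos (lam Rr * t) * Dn Rr c1 t + lam Rr * sin (lam Rr * t) ^ 2) / Dn Rr c1 t ^ 2.
Definition dxi3 Rr c1 c2 t := lam Rr * c2 * (lam Rr * sin (lam Rr * t)) / Dn Rr c1 t ^ 2.
Definition E1 Rr c1 t := dxi1 Rr c1 t * cos (t/Rr) - xi1 Rr c1 t * sin (t/Rr) / Rr
   + dxi2 Rr c1 t * sin (t/Rr) + xi2 Rr c1 t * cos (t/Rr) / Rr.
Definition E2 Rr c1 t := - dxi2 Rr c1 t * cos (t/Rr) + xi2 Rr c1 t * sin (t/Rr) / Rr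
   + dxi1 Rr c1 t * sin (t/Rr) + xi1 Rr c1 t * cos (t/Rr) / Rr.

Lemma Dalt Rr c1 x : Rr <> 0 -> c1 * / Rr + x <> 0 -> c1 + x*Rr <> 0.
Proof. intros HR HD h. apply HD. replace (c1 * / Rr + x) with ((c1 + x*Rr)/Rr) by (field; auto). rewrite h. unfold Rdiv. ring. Qed.

Lemma der1 Rr c1 c2 t : Rr <> 0 -> Dn Rr c1 t <> 0 -> is_derive (tr1 Rr c1 c2) t (E1 Rr c1 t).
Proof.
intros HR HD. unfold tr1, xi1, xi2, E1, dxi1, dxi2, xi1, xi2. unfold Dn in *.
auto_derive.
- repeat split; auto.
- unfold Rdiv in *; field; split; auto; apply Dalt; auto.
Qed.

Lemma der2 Rr c1 c2 t : Rr <> 0 -> Dn Rr c1 t <> 0 -> is_derive (tr2 Rr c1 c2) t (E2 Rr c1 t).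
Proof.
intros HR HD. unfold tr2, xi1, xi2, E2, dxi1, dxi2, xi1, xi2. unfold Dn in *.
auto_derive.
- repeat split; auto.
- unfold Rdiv in *; field; split; auto; apply Dalt; auto.
Qed.

Lemma der3 Rr c1 c2 t : Rr <> 0 -> Dn Rr c1 t <> 0 -> is_derive (tr3 Rr c1 c2) t (dxi3 Rr c1 c2 t).
Proof.
intros HR HD. unfold tr3, xi3, dxi3. unfold Dn in *.
auto_derive.
- repeat split; auto.
- unfold Rdiv in *; field; split; auto; apply Dalt; auto.
Qed.

Lemma lam_sq Rr : 0 < Rr -> Rr < 1 -> lam Rr ^ 2 = (1 - Rr^2) / Rr^2.
Proof. intros. unfold lam. unfold Rdiv. rewrite Rpow_mult_distr. rewrite pow2_sqrt by nra.
 rewrite pow_inv. reflexivity. Qed.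

Lemma lam_pos Rr : 0 < Rr -> Rr < 1 -> 0 < lam Rr.
Proof. intros. unfold lam. apply Rdiv_lt_0_compat; auto. apply sqrt_lt_R0. nra. Qed.

Lemma key Rr c1 c2 t : 0 < Rr -> Rr < 1 -> c1^2 - c2^2 = 1 -> Dn Rr c1 t <> 0 ->
  E1 Rr c1 t ^2 + E2 Rr c1 t ^2 + dxi3 Rr c1 c2 t ^2 = lam Rr ^2 * sin (lam Rr * t) ^2 / Dn Rr c1 t ^2.
Proof.
intros H0 H1 Hc HD.
assert (HR : Rr <> 0) by lra.
set (L := lam Rr). assert (HL : L^2 = (1 - Rr^2)/Rr^2) by (apply lam_sq; auto).
set (x := cos (L*t)). set (y := sin (L*t)). set (cu := cos (t/Rr)). set (su := sin (t/Rr)).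
assert (Hy : y^2 = 1 - x^2) by (unfold x, y; pose proof (sin2_cos2 (L*t)); unfold Rsqr in *; nra).
assert (Hu : su^2 = 1 - cu^2) by (unfold cu, su; pose proof (sin2_cos2 (t/Rr)); unfold Rsqr in *; nra).
assert (Hc2 : c2^2 = c1^2 - 1) by lra.
set (D := Dn Rr c1 t). assert (HDd : D = c1/Rr + x) by reflexivity.
assert (HK : Rr - 1/Rr = - Rr * L^2) by (rewrite HL; field; auto).
set (A := dxi1 Rr c1 t + xi2 Rr c1 t / Rr).
set (B := xi1 Rr c1 t / Rr - dxi2 Rr c1 t).
assert (H12 : E1 Rr c1 t ^2 + E2 Rr c1 t ^2 = (A^2 + B^2) * (cu^2 + su^2)).
{ unfold E1, E2, A, B. fold L x y cu su D. generalize (dxi1 Rr c1 t) (dxi2 Rr c1 t) (xi1 Rr c1 t) (xi2 Rr c1 t). intros. unfold Rdiv. ring. }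
rewrite H12, Hu. replace (cu ^ 2 + (1 - cu ^ 2)) with 1 by ring.
assert (HA : A = - L * y * (c1 + x/Rr) / D^2).
{ unfold A, dxi1, xi2. fold L x y D. rewrite <- HDd. rewrite HK.
  assert (HD' : D <> 0) by exact HD.
  rewrite HL. rewrite HDd in HD' |- *. unfold Rdiv; field. split; auto. apply Dalt; auto. }
assert (HD' : D <> 0) by exact HD.
assert (HB : B = L^2 * y^2 / D^2).
{ unfold B, dxi2, xi1. fold L x y D. rewrite <- HDd. rewrite HK.
  unfold Rdiv; field. auto. }
assert (Hbr : (c1 + x/Rr)^2 + L^2*(y^2+c2^2) = D^2).
{ rewrite HL, Hy, Hc2, HDd. field. auto. }
fold D. rewrite Rmult_1_r, HA, HB. unfold dxi3. fold L y D.
transitivity (L^2*y^2/D^4 * ((c1 + x/Rr)^2 + L^2*(y^2 + c2^2))).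
{ unfold Rdiv; field; auto. }
rewrite Hbr. field. auto.
Qed.

Lemma sgn_cases c1 c2 : c1^2 - c2^2 = 1 -> (sgn c1 = 1 /\ 1 <= c1) \/ (sgn c1 = -1 /\ c1 <= -1).
Proof. intros H. assert (1 <= c1 \/ c1 <= -1) as [h|h] by nra; unfold sgn.
- left. destruct (Rlt_dec 0 c1); [split; auto|lra].
- right. destruct (Rlt_dec 0 c1); [lra|]. destruct (Rlt_dec c1 0); [split; auto|lra].
Qed.

Lemma gD_pos Rr c1 c2 t : 0 < Rr -> Rr < 1 -> c1^2 - c2^2 = 1 -> 0 < sgn c1 * Dn Rr c1 t.
Proof. intros H0 H1 Hc. pose proof (COS_bound (lam Rr * t)). unfold Dn.
 assert (Hk : c1 / Rr * Rr = c1) by (field; lra).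
 destruct (sgn_cases c1 c2 Hc) as [[-> h]|[-> h]]; nra.
Qed.

Lemma Dn_ne Rr c1 c2 t : 0 < Rr -> Rr < 1 -> c1^2 - c2^2 = 1 -> Dn Rr c1 t <> 0.
Proof. intros H0 H1 Hc h. pose proof (gD_pos Rr c1 c2 t H0 H1 Hc). rewrite h in H. lra. Qed.

Lemma speed_eq Rr c1 c2 t : 0 < Rr -> Rr < 1 -> c1^2 - c2^2 = 1 ->
  speed Rr c1 c2 t = Rabs (lam Rr * sin (lam Rr * t) / Dn Rr c1 t).
Proof. intros H0 H1 Hc. pose proof (Dn_ne Rr c1 c2 t H0 H1 Hc) as HD.
 assert (HR : Rr <> 0) by lra.
 unfold speed. rewrite (is_derive_unique _ _ _ (der1 Rr c1 c2 t HR HD)).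
 rewrite (is_derive_unique _ _ _ (der2 Rr c1 c2 t HR HD)).
 rewrite (is_derive_unique _ _ _ (der3 Rr c1 c2 t HR HD)).
 rewrite key by auto. rewrite <- sqrt_Rsqr_abs. f_equal. unfold Rsqr. field. auto.
Qed.

Theorem mainTheorem12 (Rr c1 c2 : R) :
  0 < Rr -> Rr < 1 -> c1 ^ 2 - c2 ^ 2 = 1 ->
  (forall t, ex_derive (tr1 Rr c1 c2) t /\ ex_derive (tr2 Rr c1 c2) t
             /\ ex_derive (tr3 Rr c1 c2) t) /\
  (forall t,
     (Derive (tr1 Rr c1 c2) t = 0 /\ Derive (tr2 Rr c1 c2) t = 0
      /\ Derive (tr3 Rr c1 c2) t = 0)
     <-> exists n : Z, t = IZR n * PI / lam Rr) /\
  (forall n : Z,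
     let a := IZR n * PI / lam Rr in
     let b := (IZR n + 1) * PI / lam Rr in
     ex_RInt (speed Rr c1 c2) a b /\
     arc_length Rr c1 c2 a b = sgn c1 * ln (Rabs ((c1 + Rr) / (c1 - Rr))) /\
     0 < sgn c1 * ln (Rabs ((c1 + Rr) / (c1 - Rr)))).
Proof.
intros H0 H1 Hc.
assert (HR : Rr <> 0) by lra.
pose proof (lam_pos Rr H0 H1) as HL.
split; [|split].
- intros t. pose proof (Dn_ne Rr c1 c2 t H0 H1 Hc) as HD.
  split; [|split]; eexists; [apply der1|apply der2|apply der3]; auto.
- intros t. pose proof (Dn_ne Rr c1 c2 t H0 H1 Hc) as HD.
  rewrite (is_derive_unique _ _ _ (der1 Rr c1 c2 t HR HD)).
  rewrite (is_derive_unique _ _ _ (der2 Rr c1 c2 t HR HD)).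
  rewrite (is_derive_unique _ _ _ (der3 Rr c1 c2 t HR HD)).
  pose proof (key Rr c1 c2 t H0 H1 Hc HD) as K.
  split.
  + intros [h1 [h2 h3]]. rewrite h1, h2, h3 in K.
    assert (Hs : sin (lam Rr * t) = 0).
    { assert (Hz : (lam Rr * sin (lam Rr * t) / Dn Rr c1 t)^2 = 0).
      { replace ((lam Rr * sin (lam Rr * t) / Dn Rr c1 t)^2) with (lam Rr ^ 2 * sin (lam Rr * t) ^ 2 / Dn Rr c1 t ^ 2) by (field; auto). rewrite <- K. ring. }
      assert (Hz' : lam Rr * sin (lam Rr * t) / Dn Rr c1 t = 0) by nra. clear Hz. rename Hz' into Hz. unfold Rdiv in Hz.
      apply Rmult_integral in Hz as [Hz|Hz].
      - apply Rmult_integral in Hz as [Hz|Hz]; [lra|exact Hz].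
      - exfalso. apply (Rinv_neq_0_compat _ HD). exact Hz. }
    destruct (sin_eq_0_0 _ Hs) as [k Hk]. exists k. rewrite <- Hk. field. lra.
  + intros [n Hn].
    assert (Hs : sin (lam Rr * t) = 0).
    { apply sin_eq_0_1. exists n. rewrite Hn. field. lra. }
    rewrite Hs in K. 
    assert (S : E1 Rr c1 t ^ 2 + E2 Rr c1 t ^ 2 + dxi3 Rr c1 c2 t ^ 2 = 0).
    { rewrite K. unfold Rdiv. ring. }
    pose proof (pow2_ge_0 (E1 Rr c1 t)). pose proof (pow2_ge_0 (E2 Rr c1 t)).
    pose proof (pow2_ge_0 (dxi3 Rr c1 c2 t)).
    split; [|split]; nra.
- intros n a b.
  set (L := lam Rr) in *.
  set (e := cos (IZR n * PI)).
  set (g := sgn c1).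
  assert (He0 : sin (IZR n * PI) = 0) by (apply sin_eq_0_1; exists n; reflexivity).
  assert (He2 : e = 1 \/ e = -1).
  { pose proof (sin2_cos2 (IZR n * PI)) as hh. unfold Rsqr in hh. rewrite He0 in hh. fold e in hh.
    assert (hz : (e - 1) * (e + 1) = 0) by nra. apply Rmult_integral in hz as [hz|hz]; [left|right]; lra. }
  assert (Hk : c1 / Rr * Rr = c1) by (field; lra).
  assert (Hg : (g = 1 /\ 1 <= c1) \/ (g = -1 /\ c1 <= -1)) by (apply (sgn_cases c1 c2 Hc)).
  assert (Hg0 : g <> 0) by (destruct Hg as [[-> _]|[-> _]]; lra).
  assert (Hgg : g * g = 1) by (destruct Hg as [[-> _]|[-> _]]; lra).
  assert (HLa : L * a = IZR n * PI) by (unfold a; field; lra).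
  assert (HLb : L * b = IZR n * PI + PI) by (unfold b; field; lra).
  assert (Hab : a <= b).
  { apply (Rmult_le_reg_l L); auto. rewrite HLa, HLb. pose proof PI_RGT_0. lra. }
  set (df := fun t => e * g * L * sin (L * t) / Dn Rr c1 t).
  set (F := fun t => - (e * g) * ln (g * Dn Rr c1 t)).
  assert (Hsp : forall t, a <= t <= b -> speed Rr c1 c2 t = df t).
  { intros t [ht1 ht2]. rewrite speed_eq by auto. fold L. unfold df.
    pose proof (gD_pos Rr c1 c2 t H0 H1 Hc) as HgD. fold g in HgD.
    pose proof (Dn_ne Rr c1 c2 t H0 H1 Hc) as HD.
    set (r := L * t - IZR n * PI).
    assert (Hr1 : 0 <= r).
    { unfold r. rewrite <- HLa. pose proof (Rmult_le_compat_l L a t (Rlt_le _ _ HL) ht1). lra. }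
    assert (Hr2 : r <= PI).
    { unfold r. pose proof (Rmult_le_compat_l L t b (Rlt_le _ _ HL) ht2). lra. }
    assert (Hsr : sin (L * t) = e * sin r).
    { replace (L * t) with (r + IZR n * PI) by (unfold r; ring). rewrite sin_plus, He0. fold e. ring. }
    pose proof (sin_ge_0 r Hr1 Hr2) as Hsr0.
    assert (Heg : Rabs (e * g) = 1).
    { assert (Ha1 : forall z, z = 1 \/ z = -1 -> Rabs z = 1) by (intros z [->| ->]; unfold Rabs; destruct Rcase_abs; lra).
      rewrite Rabs_mult, Ha1, Ha1; auto; [ring|]. destruct Hg as [[-> _]|[-> _]]; auto. }
    transitivity (Rabs (L * sin (L * t) / Dn Rr c1 t * (e * g))).
    { rewrite Rabs_mult, Heg. ring. }
    rewrite Rabs_pos_eq.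
    - unfold Rdiv. ring.
    - replace (L * sin (L * t) / Dn Rr c1 t * (e * g)) with (L * (e * sin (L * t)) * (g * g) / (g * Dn Rr c1 t)) by (field; auto).
      rewrite Hgg. apply Rmult_le_pos.
      + rewrite Hsr. replace (e * (e * sin r)) with ((e * e) * sin r) by ring.
        assert (e * e = 1) by (destruct He2 as [-> | ->]; ring). rewrite H. nra.
      + left. apply Rinv_0_lt_compat. exact HgD. }
  assert (HdF : forall t, is_derive F t (df t)).
  { intros t. pose proof (gD_pos Rr c1 c2 t H0 H1 Hc) as HgD. fold g in HgD.
    pose proof (Dn_ne Rr c1 c2 t H0 H1 Hc) as HD.
    unfold F, df, Dn in *. auto_derive.
    - exact HgD.
    - fold L. unfold Rdiv. field. split; auto. split; auto. apply Dalt; auto. }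
  assert (Hcont : forall t, continuous df t).
  { intros t. apply (@ex_derive_continuous R_AbsRing R_NormedModule df t). pose proof (Dn_ne Rr c1 c2 t H0 H1 Hc) as HD.
    unfold df, Dn in *. auto_derive. exact HD. }
  assert (HI : is_RInt (speed Rr c1 c2) a b (F b - F a)).
  { apply is_RInt_ext with df.
    - intros x [hx1 hx2]. rewrite Rmin_left in hx1 by auto. rewrite Rmax_right in hx2 by auto.
      symmetry. apply Hsp. lra.
    - apply (is_RInt_derive F df a b); intros; auto. }
  set (P := g * (c1 / Rr + 1)). set (Q := g * (c1 / Rr - 1)).
  assert (HP : 0 < P) by (unfold P; destruct Hg as [[-> h]|[-> h]]; nra).
  assert (HQ : 0 < Q) by (unfold Q; destruct Hg as [[-> h]|[-> h]]; nra).
  assert (Hval : F b - F a = g * (ln P - ln Q)).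
  { assert (HDa : Dn Rr c1 a = c1 / Rr + e) by (unfold Dn; fold L; rewrite HLa; reflexivity).
    assert (HDb : Dn Rr c1 b = c1 / Rr - e) by (unfold Dn; fold L; rewrite HLb, neg_cos; reflexivity).
    unfold F. rewrite HDa, HDb. unfold P, Q.
    destruct He2 as [-> | ->].
    - ring.
    - replace (c1 / Rr - -1) with (c1 / Rr + 1) by ring.
      replace (c1 / Rr + -1) with (c1 / Rr - 1) by ring. ring. }
  assert (Hratio : Rabs ((c1 + Rr) / (c1 - Rr)) = P / Q).
  { assert (c1 - Rr <> 0) by (destruct Hg as [[_ h]|[_ h]]; lra).
    assert (c1 / Rr - 1 <> 0) by (intro h; unfold Q in HQ; rewrite h in HQ; lra).
    rewrite Rabs_pos_eq.
    - unfold P, Q. field. repeat split; auto.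
    - replace ((c1 + Rr) / (c1 - Rr)) with (P / Q).
      + left. apply Rdiv_lt_0_compat; auto.
      + unfold P, Q. field. repeat split; auto. }
  assert (Hlnd : ln (P / Q) = ln P - ln Q).
  { unfold Rdiv. rewrite ln_mult; [rewrite ln_Rinv; [ring|auto]|auto|apply Rinv_0_lt_compat; auto]. }
  fold g. rewrite Hratio, Hlnd, <- Hval.
  split; [|split].
  + exists (F b - F a). exact HI.
  + unfold arc_length. apply is_RInt_unique. exact HI.
  + rewrite Hval. destruct Hg as [[Hg1 h]|[Hg1 h]]; rewrite Hg1.
    * assert (ln Q < ln P) by (apply ln_increasing; auto; unfold P, Q; rewrite Hg1; lra). lra.
    * assert (ln P < ln Q) by (apply ln_increasing; auto; unfold P, Q; rewrite Hg1; lra). lra.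
Qed.
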